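(* For a weakly coupled POMDP and horizon $T$, the componentwise inequalities (VI$^m$) are valid for MILP (IP), for MILP (LB) and for the nonlinear program (UB): every feasible solution of each of these programs can be extended by nonnegative variables $\tau^{t,m}_{s'a'soa}$ satisfying (VI$^m$) for all $m$. Moreover, there exist instances and feasible solutions of the linear relaxation of (IP) that do not satisfy (VI$^m$) (for any choice of the additional variables).
   Context: Weakly coupled POMDP: components $m\in[M]$, each a POMDP $(\mathcal X_S^m,\mathcal X_O^m,\mathcal X_A^m,\mathfrak p^m,\mathbf r^m)$ (initial $p^m(s)$, emissions $p^m(o|s)$, transitions $p^m(s'|s,a)$, reward $r^m$); $\mathbf D^m:\mathcal X_A^m\to\mathbb R^q$, $\mathbf b\in\mathbb R^q_{\ge0}$. For a POMDP, $\mathcal Q(T,\mathcal X_S,\mathcal X_O,\mathcal X_A,\mathfrak p)$: $(\tau,\delta)$ with $\delta^t_{a|o}\ge0$, $\sum_a\delta^t_{a|o}=1$, nonnegative $\tau$ with (i) $\tau^1_s=p(s)$; (ii) $\sum_{o,a}\tau^t_{soa}=\nu^t_s$, $\nu^1_s=\tau^1_s$, $\nu^t_s=\sum_{s'',a''}\tau^{t-1}_{s''a''s}$; (iii) $\sum_{\bar s}\tau^t_{sa\bar s}=\sum_o\tau^t_{soa}$; (iv) $\tau^t_{sas'}=p(s'|s,a)\sum_{\bar s}\tau^t_{sa\bar s}$; (v) $\tau^t_{soa}=\delta^t_{a|o}p(o|s)\sum_{o',a'}\tau^t_{so'a'}$. $\mathcal Q^{\mathrm d}$: same with $\delta^t_{a|o}\in\{0,1\}$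 and (v) replaced by $\tau^t_{soa}\le p(o|s)\nu^t_s$, $\tau^t_{soa}\le\delta^t_{a|o}$, $\tau^t_{soa}\ge p(o|s)\nu^t_s+\delta^t_{a|o}-1$. (IP): maximize $\sum_t\sum_m\sum_{s,a,s'}r^m(s,a,s')\tau^{t,m}_{sas'}$ s.t. $(\tau^m,\delta^m)\in\mathcal Q^{\mathrm d}(T,\mathcal X_S^m,\mathcal X_O^m,\mathcal X_A^m,\mathfrak p^m)$, $\tau^{t,m}_a=\sum_{s,o}\tau^{t,m}_{soa}$, $\sum_m\sum_a\mathbf D^m(a)\tau^{t,m}_a\le\mathbf b$ ($t\in[T]$); its linear relaxation allows $\delta^{t,m}_{a|o}\in[0,1]$. (UB): same with $\mathcal Q$ instead of $\mathcal Q^{\mathrm d}$. (LB): same objective, $(\tau^m,\delta^m)\in\mathcal Q^{\mathrm d}$ for all $m$, and $\sum_m\sum_a\mathbf D^m(a)\delta^{t,m}_{a|o^m}\le\mathbf b$ for all $\mathbf o\in\prod_m\mathcal X_O^m$, $t\in[T]$. (VI$^m$): for $t\in\{2,\dots,T\}$ and all $s,s'\in\mathcal X_S^m$, $o\in\mathcal X_O^m$, $a,a'\in\mathcal X_A^m$: $\sum_{s',a'}\tau^{t,m}_{s'a'soa}=\tau^{t,m}_{soa}$; $\sum_a\tau^{t,m}_{s'a'soa}=p^m(o|s)p^m(s|s',a')\tau^{t-1,m}_{s'a'}$ with $\tau^{t-1,m}_{s'a'}:=\sum_{\bar s}\tau^{t-1,m}_{s'a'\bar s}$; $\tau^{t,m}_{s'a'soa}=p^m(s|s',a',o)\sum_{\bar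 s}\tau^{t,m}_{s'a'\bar soa}$, where $p^m(s|s',a',o)=p^m(o|s)p^m(s|s',a')/\sum_{\bar s}p^m(o|\bar s)p^m(\bar s|s',a')$. *)

(* Defs.v *)
From HB Require Import structures.
From mathcomp Require Import all_boot all_order all_algebra.
Set Implicit Arguments. Unset Strict Implicit. Unset Printing Implicit Defensive.
Import Order.TTheory GRing.Theory Num.Theory.
Local Open Scope ring_scope.

Record pomdp (R : realFieldType) := Pomdp {
  St : finType; Ob : finType; Ac : finType;
  p_init : St -> R;
  p_obs : St -> Ob -> R;             (* p_obs s o   = p(o|s)     *)
  p_tr : St -> Ac -> St -> R;        (* p_tr s a s' = p(s'|s,a)  *)
  rew : St -> Ac -> St -> R;
  p_init_ge0 : forall s, 0 <= p_init s;
  p_init_sum : \sum_(s : St) p_init s = 1;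
  p_obs_ge0 : forall s o, 0 <= p_obs s o;
  p_obs_sum : forall s, \sum_(o : Ob) p_obs s o = 1;
  p_tr_ge0 : forall s a s', 0 <= p_tr s a s';
  p_tr_sum : forall s a, \sum_(s' : St) p_tr s a s' = 1 }.

(* Variable families, indexed by time t : nat (times 1..T are used). *)
Definition soaT (R : realFieldType) (P : pomdp R) :=
  nat -> St P -> Ob P -> Ac P -> R.
Definition sasT (R : realFieldType) (P : pomdp R) :=
  nat -> St P -> Ac P -> St P -> R.
Definition polT (R : realFieldType) (P : pomdp R) :=
  nat -> Ob P -> Ac P -> R.
Definition viT (R : realFieldType) (P : pomdp R) :=
  nat -> St P -> Ac P -> St P -> Ob P -> Ac P -> R.

Section OnePOMDP.
Variables (R : realFieldType) (P : pomdp R) (T : nat).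

Definition nu (tsas : sasT P) (t : nat) (s : St P) : R :=
  if t == 1%N then p_init s
  else \sum_(s'' : St P) \sum_(a'' : Ac P) tsas t.-1 s'' a'' s.

(* nonnegativity, simplex constraints on delta, and (i)-(iv) *)
Definition Q_common (tso : soaT P) (tsas : sasT P) (dl : polT P) : Prop :=
  forall t, (1 <= t <= T)%N ->
    (forall s o a, 0 <= tso t s o a) /\
    (forall s a s', 0 <= tsas t s a s') /\
    (forall o a, 0 <= dl t o a) /\
    (forall o, \sum_(a : Ac P) dl t o a = 1) /\
    (forall s, \sum_(o : Ob P) \sum_(a : Ac P) tso t s o a = nu tsas t s) /\
    (forall s a, \sum_(sb : St P) tsas t s a sb = \sum_(o : Ob P) tso t s o a) /\
    (forall s a s', tsas t s a s' = p_tr s a s' * \sum_(sb : St P) tsas t s a sb).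

(* the set Q(T, ...) : nonlinear constraint (v) *)
Definition inQ (tso : soaT P) (tsas : sasT P) (dl : polT P) : Prop :=
  Q_common tso tsas dl /\
  forall t, (1 <= t <= T)%N -> forall s o a,
    tso t s o a = dl t o a * p_obs s o *
                  \sum_(o' : Ob P) \sum_(a' : Ac P) tso t s o' a'.

(* linearized version of (v) *)
Definition lin_v (tso : soaT P) (tsas : sasT P) (dl : polT P) : Prop :=
  forall t, (1 <= t <= T)%N -> forall s o a,
    tso t s o a <= p_obs s o * nu tsas t s /\
    tso t s o a <= dl t o a /\
    p_obs s o * nu tsas t s + dl t o a - 1 <= tso t s o a.

Definition inQd (tso : soaT P) (tsas : sasT P) (dl : polT P) : Prop :=
  Q_common tso tsas dl /\
  (forall t, (1 <= t <= T)%N -> forall o a, dl t o a = 0 \/ dl t o a = 1) /\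
  lin_v tso tsas dl.

Definition inQd_relax (tso : soaT P) (tsas : sasT P) (dl : polT P) : Prop :=
  Q_common tso tsas dl /\
  (forall t, (1 <= t <= T)%N -> forall o a, 0 <= dl t o a <= 1) /\
  lin_v tso tsas dl.

(* p(s|s',a',o) ; if the denominator vanishes, MathComp gives x/0 = 0 *)
Definition p_post (s' : St P) (a' : Ac P) (o : Ob P) (s : St P) : R :=
  p_obs s o * p_tr s' a' s /
  \sum_(sb : St P) p_obs sb o * p_tr s' a' sb.

Definition VI (tso : soaT P) (tsas : sasT P) (x : viT P) : Prop :=
  forall t, (2 <= t <= T)%N ->
    (forall s' a' s o a, 0 <= x t s' a' s o a) /\
    (forall s o a,
       \sum_(s' : St P) \sum_(a' : Ac P) x t s' a' s o a = tso t s o a) /\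
    (forall s' a' s o,
       \sum_(a : Ac P) x t s' a' s o a =
       p_obs s o * p_tr s' a' s * \sum_(sb : St P) tsas t.-1 s' a' sb) /\
    (forall s' a' s o a,
       x t s' a' s o a = p_post s' a' o s * \sum_(sb : St P) x t s' a' sb o a).

End OnePOMDP.

Section Coupled.
Variables (R : realFieldType) (M : nat) (P : 'I_M -> pomdp R) (T q : nat)
  (D : forall m : 'I_M, Ac (P m) -> 'I_q -> R) (b : 'I_q -> R).

Definition linking (tso : forall m, soaT (P m)) : Prop :=
  forall t, (1 <= t <= T)%N -> forall j : 'I_q,
    \sum_(m < M) \sum_(a : Ac (P m))
       @D m a j * (\sum_(s : St (P m)) \sum_(o : Ob (P m)) tso m t s o a) <= b j.

Definition linking_LB (dl : forall m, polT (P m)) : Prop :=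
  forall t, (1 <= t <= T)%N -> forall (o : forall m, Ob (P m)) (j : 'I_q),
    \sum_(m < M) \sum_(a : Ac (P m)) @D m a j * dl m t (o m) a <= b j.

Definition feasible_IP (tso : forall m, soaT (P m)) (tsas : forall m, sasT (P m)) (dl : forall m, polT (P m)) : Prop :=
  (forall m, inQd T (tso m) (tsas m) (dl m)) /\ linking tso.

Definition feasible_IP_relax (tso : forall m, soaT (P m)) (tsas : forall m, sasT (P m)) (dl : forall m, polT (P m)) : Prop :=
  (forall m, inQd_relax T (tso m) (tsas m) (dl m)) /\ linking tso.

Definition feasible_UB (tso : forall m, soaT (P m)) (tsas : forall m, sasT (P m)) (dl : forall m, polT (P m)) : Prop :=
  (forall m, inQ T (tso m) (tsas m) (dl m)) /\ linking tso.

Definition feasible_LB (tso : forall m, soaT (P m)) (tsas : forall m, sasT (P m))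
  (dl : forall m, polT (P m)) : Prop :=
  (forall m, inQd T (tso m) (tsas m) (dl m)) /\ linking_LB dl.

Definition satisfies_VI (tso : forall m, soaT (P m)) (tsas : forall m, sasT (P m)) : Prop :=
  exists x : forall m, viT (P m), forall m, VI T (tso m) (tsas m) (x m).

End Coupled.

(* Main.v *)
Require Import Defs.
From HB Require Import structures.
From mathcomp Require Import all_boot all_order all_algebra.
From mathcomp Require Import ring lra.
Set Implicit Arguments. Unset Strict Implicit. Unset Printing Implicit Defensive.
Import Order.TTheory GRing.Theory Num.Theory.
Local Open Scope ring_scope.

Section Helpers.
Variable R : realFieldType.

Definition xw (P : pomdp R) (tsas : sasT P) (dl : polT P) : viT P :=
  fun t s' a' s o a =>
    dl t o a * p_obs s o * p_tr s' a' s * (\sum_(sb : St P) tsas t.-1 s' a' sb).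

Lemma VI_xw (P : pomdp R) (T : nat) (tso : soaT P) (tsas : sasT P) (dl : polT P) :
  Q_common T tso tsas dl ->
  (forall t, (1 <= t <= T)%N -> forall s o a,
      tso t s o a = dl t o a * p_obs s o * nu tsas t s) ->
  VI T tso tsas (xw tsas dl).
Proof.
move=> HQ Heq t /andP[t2 tT].
have t1 : (1 <= t <= T)%N by rewrite tT andbT; apply: leq_trans t2.
have tm1 : (1 <= t.-1 <= T)%N.
  by apply/andP; split; [rewrite -ltnS prednK //; apply: leq_trans t2 | apply: leq_trans (leq_pred _) tT].
have [g0 [gs0 [gd0 [gd1 [gii [giii giv]]]]]] := HQ _ t1.
have [h0 [hs0 [hd0 [hd1 [hii [hiii hiv]]]]]] := HQ _ tm1.
have Sge0 : forall s' a', 0 <= \sum_(sb : St P) tsas t.-1 s' a' sb.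
  by move=> s' a'; apply: sumr_ge0 => i _; apply: hs0.
split; [|split; [|split]].
- move=> s' a' s o a; rewrite /xw.
  by rewrite !mulr_ge0 // ?p_obs_ge0 ?p_tr_ge0.
- move=> s o a; rewrite Heq // /nu.
  have -> : (t == 1%N) = false by apply/negbTE; rewrite neq_ltn t2 orbT.
  rewrite mulr_sumr; apply: eq_bigr => s' _; rewrite mulr_sumr; apply: eq_bigr => a' _.
  rewrite /xw hiv -!mulrA; done.
- move=> s' a' s o.
  rewrite /xw.
  under eq_bigr => a _ do rewrite -!mulrA.
  by rewrite -mulr_suml gd1 mul1r !mulrA.
- move=> s' a' s o a.
  set Z := \sum_(sb : St P) p_obs sb o * p_tr s' a' sb.
  have Zge0 : forall sb, 0 <= p_obs sb o * p_tr s' a' sb.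
    by move=> sb; rewrite mulr_ge0 ?p_obs_ge0 ?p_tr_ge0.
  have [Z0|Zn0] := eqVneq Z 0.
  + have h := psumr_eq0P (fun i _ => Zge0 i) Z0 (i := s) isT.
    rewrite /p_post -/Z /xw Z0 invr0 !mulr0 mul0r.
    by rewrite -(mulrA (dl t o a)) h mulr0 mul0r.
  + have -> : \sum_(sb : St P) xw tsas dl t s' a' sb o a =
              dl t o a * (\sum_(sb0 : St P) tsas t.-1 s' a' sb0) * Z.
      rewrite /Z mulr_sumr; apply: eq_bigr => sb _; rewrite /xw; ring.
    rewrite /p_post -/Z /xw; field; exact: Zn0.
Qed.

Lemma Qd_eq (P : pomdp R) (T : nat) (tso : soaT P) (tsas : sasT P) (dl : polT P) :
  inQd T tso tsas dl ->
  forall t, (1 <= t <= T)%N -> forall s o a,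
      tso t s o a = dl t o a * p_obs s o * nu tsas t s.
Proof.
move=> [HQ [Hb Hl]] t tt s o a.
have [g0 _] := HQ _ tt.
have [l1 [l2 l3]] := Hl _ tt s o a.
have h0 := g0 s o a.
case: (Hb _ tt o a) => E; rewrite E in l2 l3 *.
- rewrite !mul0r; lra.
- rewrite mul1r; lra.
Qed.

Lemma Q_eq (P : pomdp R) (T : nat) (tso : soaT P) (tsas : sasT P) (dl : polT P) :
  inQ T tso tsas dl ->
  forall t, (1 <= t <= T)%N -> forall s o a,
      tso t s o a = dl t o a * p_obs s o * nu tsas t s.
Proof.
move=> [HQ Hv] t tt s o a.
have [_ [_ [_ [_ [gii _]]]]] := HQ _ tt.
by rewrite -gii; apply: Hv.
Qed.

Lemma sum_unit (F : unit -> R) : \sum_(o : unit) F o = F tt.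
Proof. by rewrite (big_pred1 tt) // => -[]. Qed.

End Helpers.

Section Counter.
Variable R : realFieldType.

Lemma ex_init_sum : \sum_(s : bool) (fun _ : bool => 1/2 : R) s = 1.
Proof. rewrite big_bool /=; lra. Qed.
Lemma ex_obs_sum : forall s : bool, \sum_(o : unit) (fun _ _ => 1 : R) s o = 1.
Proof. by move=> s; rewrite sum_unit. Qed.
Lemma ex_tr_sum : forall (s a : bool),
  \sum_(s' : bool) (fun _ _ _ => 1/2 : R) s a s' = 1.
Proof. move=> s a; rewrite big_bool /=; lra. Qed.
Lemma half_ge0 : 0 <= (1/2 : R).
Proof. lra. Qed.

Definition exP : pomdp R :=
  @Pomdp R bool unit bool (fun _ => 1/2) (fun _ _ => 1) (fun _ _ _ => 1/2)
    (fun _ _ _ => 0) (fun _ => half_ge0) ex_init_sum (fun _ _ => ler01)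
    ex_obs_sum (fun _ _ _ => half_ge0) ex_tr_sum.

Definition ex_tso : soaT exP := fun t (s : bool) (o : unit) (a : bool) =>
  if t == 1%N then 1/4 else if s == a then 1/2 else 0.
Definition ex_tsas : sasT exP := fun t s a (s' : bool) => 1/2 * ex_tso t s tt a.
Definition ex_dl : polT exP := fun _ _ _ => 1/2.

Lemma ex_relax : inQd_relax 2 ex_tso ex_tsas ex_dl.
Proof.
have nu1 : forall s, nu ex_tsas 1 s = 1/2 by [].
have nu2 : forall s, nu ex_tsas 2 s = 1/2.
  by move=> s; rewrite /nu /= !big_bool /= /ex_tsas /ex_tso /=; lra.
have tt12 : forall t, (1 <= t <= 2)%N -> t = 1%N \/ t = 2%N.
  by move=> [|[|[|t]]] //=; auto.
split; [|split].
- move=> t /tt12 [] -> {t}; (split; [|split; [|split; [|split; [|split; [|split]]]]]);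
    repeat (let x := fresh in move=> x; try case: x);
    rewrite ?nu1 ?nu2 /ex_tsas /ex_tso /ex_dl /= ?sum_unit ?big_bool /= ?sum_unit ?big_bool /=;
    try lra.
- move=> t _ o a; rewrite /ex_dl; apply/andP; split; lra.
- move=> t /tt12 [] -> {t} s o a; rewrite ?nu1 ?nu2 /ex_tso /ex_dl /=;
    try case: (s == a); split; try split; lra.
Qed.

Lemma ex_notVI (x : viT exP) : ~ VI 2 ex_tso ex_tsas x.
Proof.
move=> /(_ 2%N isT) [_ [H2 [_ H4]]].
have post : forall (s' : St exP) (a' : Ac exP) (s : St exP), p_post s' a' (tt : Ob exP) s = 1/2 :> R.
  move=> *; rewrite /p_post /= big_bool /= !mul1r.
  have -> : (2^-1 + 2^-1 : R) = 1 by lra.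
  by rewrite invr1 mulr1.
have E : forall (s s' : St exP) (a' a : Ac exP), x 2%N s' a' s tt a = x 2%N s' a' true tt a.
  by move=> s s' a' a; rewrite H4 post [in RHS]H4 post.
have := H2 true tt true; have := H2 false tt true.
rewrite /ex_tso /=.
under eq_bigr => s' _ do under eq_bigr => a' _ do rewrite (E false).
move=> ->; lra.
Qed.

End Counter.

Theorem mainTheorem8 (R : realFieldType) :
  (forall (M : nat) (P : 'I_M -> pomdp R) (T q : nat)
     (D : forall m : 'I_M, Ac (P m) -> 'I_q -> R) (b : 'I_q -> R),
     (forall j, 0 <= b j) ->
     forall (tso : forall m, soaT (P m)) (tsas : forall m, sasT (P m))
            (dl : forall m, polT (P m)),
       feasible_IP T D b tso tsas dl \/
       feasible_LB T D b tso tsas dl \/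
       feasible_UB T D b tso tsas dl ->
       satisfies_VI T tso tsas)
  /\
  (exists (M : nat) (P : 'I_M -> pomdp R) (T q : nat)
     (D : forall m : 'I_M, Ac (P m) -> 'I_q -> R) (b : 'I_q -> R)
     (tso : forall m, soaT (P m)) (tsas : forall m, sasT (P m))
     (dl : forall m, polT (P m)),
     (forall j, 0 <= b j) /\
     feasible_IP_relax T D b tso tsas dl /\
     ~ satisfies_VI T tso tsas).
Proof.
split.
- move=> M P T q D b _ tso tsas dl H.
  exists (fun m => xw (tsas m) (dl m)) => m.
  case: H => [[H _]|[[H _]|[H _]]].
  + exact: VI_xw (proj1 (H m)) (Qd_eq (H m)).
  + exact: VI_xw (proj1 (H m)) (Qd_eq (H m)).
  + exact: VI_xw (proj1 (H m)) (Q_eq (H m)).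
- exists 1%N, (fun _ => exP R), 2%N, 0%N, (fun _ _ _ => 0), (fun _ => 0).
  exists (fun _ => ex_tso (R:=R)), (fun _ => ex_tsas (R:=R)), (fun _ => ex_dl (R:=R)).
  split; first by move=> [].
  split.
  + split; first by move=> _; exact: ex_relax.
    by move=> t _ [].
  + move=> [x Hx]; exact: (ex_notVI (Hx ord0)).
Qed.
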